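(* Consider the system $\dot x(t)=f(x(t),u(t))$, $y(t)=h(x(t),u(t))$ with $x(t)\in X\subset\mathbb{R}^n$, $u(t)\in U\subset\mathbb{R}^m$, $y(t)\in Y\subset\mathbb{R}^m$, and let $\phi(t,t_0,x_0,u_{t_0:t})$ denote the state at time $t$ from $x_0$ at time $t_0$ under input $u_{t_0:t}$. Let $S:X\to\mathbb{R}_{\ge0}$ with $S(\mathbf{0})=0$ be a storage function, and for $t_1>t_0\ge0$, $x_0\in X$, $u_{t_0:t_1}\subset U$, with output $y$ and $x_1=\phi(t_1,t_0,x_0,u_{t_0:t_1})$, put $$\psi_\gamma=\frac{\int_{t_0}^{t_1}y^\mathsf{T}y\,dt+(S(x_1)-S(x_0))}{\int_{t_0}^{t_1}u^\mathsf{T}u\,dt},\quad \psi_\nu=\frac{\int_{t_0}^{t_1}u^\mathsf{T}y\,dt-(S(x_1)-S(x_0))}{\int_{t_0}^{t_1}u^\mathsf{T}u\,dt},\quad \psi_\rho=\frac{\int_{t_0}^{t_1}u^\mathsf{T}y\,dt-(S(x_1)-S(x_0))}{\int_{t_0}^{t_1}y^\mathsf{T}y\,dt}$$ (whenever the denominator is nonzero), and $\gamma_*^2=\max\psi_\gamma$, $\nu_*=\min\psi_\nu$, $\rho_*=\min\psi_\rho$ over all such tuples with nonzero denominator. Let $(u(t),y(t))$, $t\in[t_o,t_f)$, be a given input-output profile with state trajectory $x(t)$ such that $|\tfrac{d}{dt}S(x(t))|\le K_s$ for $t\in[t_o,t_f)$, and let $\tilde\Psi_u=\{t\in[t_o,t_f):u(t)=0\}$,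 $\tilde\Psi_y=\{t\in[t_o,t_f):y(t)=0\}$. Define $$\hat\gamma_*^2=\max_{t\in[t_o,t_f)\setminus\tilde\Psi_u}\frac{y^\mathsf{T}(t)y(t)-K_s}{u^\mathsf{T}(t)u(t)},\quad \hat\nu_*=\min_{t\in[t_o,t_f)\setminus\tilde\Psi_u}\frac{u^\mathsf{T}(t)y(t)+K_s}{u^\mathsf{T}(t)u(t)},\quad \hat\rho_*=\min_{t\in[t_o,t_f)\setminus\tilde\Psi_y}\frac{u^\mathsf{T}(t)y(t)+K_s}{y^\mathsf{T}(t)y(t)}.$$ Then $\hat\gamma_*^2\le\gamma_*^2$, $\hat\nu_*\ge\nu_*$ and $\hat\rho_*\ge\rho_*$.
   Context: $\gamma_*^2,\nu_*,\rho_*$ are the paper's optimal $\mathcal{L}_2$-gain (squared), input feedforward passivity index and output feedback passivity index of the system, expressed through the storage function $S$; $\hat\gamma_*^2,\hat\nu_*,\hat\rho_*$ are the proposed on-line estimates. *)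

(* Defs.v *)
From HB Require Import structures.
From mathcomp Require Import all_boot all_order all_algebra.
From mathcomp Require Import all_classical all_reals all_analysis.
Set Implicit Arguments. Unset Strict Implicit. Unset Printing Implicit Defensive.
Import Order.TTheory GRing.Theory Num.Theory.
Import numFieldNormedType.Exports.
Local Open Scope classical_set_scope.
Local Open Scope ring_scope.

Definition vdot (R : realType) (k : nat) (a b : 'rV[R]_k) : R :=
  \sum_(i < k) a ord0 i * b ord0 i.

Definition Rint (R : realType) (t0 t1 : R) (g : R -> R) : R :=
  \int[lebesgue_measure]_(s in `[t0, t1]) g s.

Definition admissible (R : realType) (n m : nat)
    (f : 'rV[R]_n -> 'rV[R]_m -> 'rV[R]_n)
    (X : set 'rV[R]_n) (U : set 'rV[R]_m)
    (t0 t1 : R) (x : R -> 'rV[R]_n) (u : R -> 'rV[R]_m) : Prop :=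
  0 <= t0 /\ t0 < t1 /\
  (forall s, t0 <= s <= t1 -> X (x s) /\ U (u s)) /\
  {within `[t0, t1], continuous u} /\
  {within `[t0, t1], continuous x} /\
  (forall s, t0 < s < t1 -> is_derive s 1 x (f (x s) (u s))).

Section Indices.
Variables (R : realType) (n m : nat)
  (f : 'rV[R]_n -> 'rV[R]_m -> 'rV[R]_n) (h : 'rV[R]_n -> 'rV[R]_m -> 'rV[R]_m)
  (S : 'rV[R]_n -> R).

Definition Iuu t0 t1 (u : R -> 'rV[R]_m) := Rint t0 t1 (fun s => vdot (u s) (u s)).
Definition Iyy t0 t1 x (u : R -> 'rV[R]_m) :=
  Rint t0 t1 (fun s => vdot (h (x s) (u s)) (h (x s) (u s))).
Definition Iuy t0 t1 x (u : R -> 'rV[R]_m) :=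
  Rint t0 t1 (fun s => vdot (u s) (h (x s) (u s))).

Definition psi_gamma t0 t1 x u :=
  (Iyy t0 t1 x u + (S (x t1) - S (x t0))) / Iuu t0 t1 u.
Definition psi_nu t0 t1 x u :=
  (Iuy t0 t1 x u - (S (x t1) - S (x t0))) / Iuu t0 t1 u.
Definition psi_rho t0 t1 x u :=
  (Iuy t0 t1 x u - (S (x t1) - S (x t0))) / Iyy t0 t1 x u.

Definition gamma_star2 X U : \bar R :=
  ereal_sup [set e | exists t0 t1 x u, admissible f X U t0 t1 x u /\
     Iuu t0 t1 u != 0 /\ e = (psi_gamma t0 t1 x u)%:E].
Definition nu_star X U : \bar R :=
  ereal_inf [set e | exists t0 t1 x u, admissible f X U t0 t1 x u /\
     Iuu t0 t1 u != 0 /\ e = (psi_nu t0 t1 x u)%:E].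
Definition rho_star X U : \bar R :=
  ereal_inf [set e | exists t0 t1 x u, admissible f X U t0 t1 x u /\
     Iyy t0 t1 x u != 0 /\ e = (psi_rho t0 t1 x u)%:E].
End Indices.

Definition gamma_hat2 (R : realType) (m : nat) (u y : R -> 'rV[R]_m)
    (to tf Ks : R) : \bar R :=
  ereal_sup [set e | exists t, to <= t < tf /\ u t != 0 /\
     e = ((vdot (y t) (y t) - Ks) / vdot (u t) (u t))%:E].
Definition nu_hat (R : realType) (m : nat) (u y : R -> 'rV[R]_m)
    (to tf Ks : R) : \bar R :=
  ereal_inf [set e | exists t, to <= t < tf /\ u t != 0 /\
     e = ((vdot (u t) (y t) + Ks) / vdot (u t) (u t))%:E].
Definition rho_hat (R : realType) (m : nat) (u y : R -> 'rV[R]_m)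
    (to tf Ks : R) : \bar R :=
  ereal_inf [set e | exists t, to <= t < tf /\ y t != 0 /\
     e = ((vdot (u t) (y t) + Ks) / vdot (y t) (y t))%:E].

(* Main.v *)
Require Import Defs.
From HB Require Import structures.
From mathcomp Require Import all_boot all_order all_algebra.
From mathcomp Require Import all_classical all_reals all_analysis.
From mathcomp Require Import ring lra.
Set Implicit Arguments. Unset Strict Implicit. Unset Printing Implicit Defensive.
Import Order.TTheory GRing.Theory Num.Theory.
Import numFieldNormedType.Exports.
Local Open Scope classical_set_scope.
Local Open Scope ring_scope.
Lemma shift_within (R : realType) (V : topologicalType) (F : R -> V) (A B : set R) (c : R) :
  {within B, continuous F} -> (forall s, A s -> B (s + c)) ->
  {within A, continuous (fun s => F (s + c))}.
Proof.
move=> hF AB; apply/subspace_continuousP => s As.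
have /subspace_continuousP HF := hF.
have HFs := HF _ (AB _ As).
apply: (cvg_comp (fun z => z + c) F _ HFs).
move=> W /=; rewrite /within /= => HW.
have sc : (fun z => z + c) @ nbhs s --> nbhs (s + c).
  by apply: cvgD; [exact: cvg_id|exact: cvg_cst].
have := sc _ HW; rewrite /= nbhs_simpl.
move=> H; rewrite nbhs_simpl /=.
have H2 : \forall z \near s, B (z + c) -> W (z + c) := H.
near=> z => Az; apply: (near H2 z) => //; exact: AB.
Unshelve. all: by end_near.
Qed.

Lemma vdot_within (R : realType) k (A : set R) (a b : R -> 'rV[R]_k) :
  {within A, continuous a} -> {within A, continuous b} ->
  {within A, continuous (fun s => vdot (a s) (b s))}.
Proof.
move=> ca cb; rewrite /vdot.
apply: (@continuous_big _ _ +%R 0 predT add_continuous (subspace A) _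
   (fun i (s : subspace A) => a s ord0 i * b s ord0 i)) => i _ x.
apply: continuousM.
- exact: (continuous_comp (ca x) (@coord_continuous R 1 k ord0 i (a x))).
- exact: (continuous_comp (cb x) (@coord_continuous R 1 k ord0 i (b x))).
Qed.

Lemma vdot_ge0 (R : realType) k (a : 'rV[R]_k) : 0 <= vdot a a.
Proof. by rewrite /vdot sumr_ge0 // => i _; rewrite -expr2 sqr_ge0. Qed.

Lemma vdot_gt0 (R : realType) k (a : 'rV[R]_k) : a != 0 -> 0 < vdot a a.
Proof.
move=> a0; rewrite lt_neqAle vdot_ge0 andbT; apply: contra a0 => /eqP H.
have : forall i, i \in 'I_k -> a ord0 i * a ord0 i = 0.
  apply/psumr_eq0P; last by move: H; rewrite /vdot => <-.
  by move=> i _; rewrite -expr2 sqr_ge0.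
move=> Hi; apply/eqP/matrixP => i j; rewrite (ord1 i) [RHS]mxE.
have := Hi j isT; move/eqP; rewrite mulf_eq0 orbb => /eqP -> //.
Qed.

Lemma core (R : realType) (to tf t : R) (g1 g2 : R -> R) :
  {within `[to, tf[, continuous g1} -> {within `[to, tf[, continuous g2} ->
  to <= t -> t < tf -> 0 < g1 t -> 0 < g2 t ->
  exists d, 0 < d /\ t + d < tf /\
    forall s, t <= s <= t + d -> 0 < g1 s /\ 0 < g2 s.
Proof.
move=> /subspace_continuousP c1 /subspace_continuousP c2 tot ttf g1t g2t.
have At : [set` `[to, tf[] t by rewrite /= in_itv /= tot ttf.
have n1 : \forall s \near within [set` `[to, tf[] (nbhs t), 0 < g1 s.
  exact: (cvgr_gt _ (c1 t At) _ g1t).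
have n2 : \forall s \near within [set` `[to, tf[] (nbhs t), 0 < g2 s.
  exact: (cvgr_gt _ (c2 t At) _ g2t).
have n1' : \forall s \near t, [set` `[to, tf[] s -> 0 < g1 s := n1.
have n2' : \forall s \near t, [set` `[to, tf[] s -> 0 < g2 s := n2.
have n12 : \forall s \near t, [set` `[to, tf[] s -> 0 < g1 s /\ 0 < g2 s.
  by near=> s => As; split; [exact: (near n1' s) | exact: (near n2' s)].
move: n12 => /nbhs_ballP [e e0 He].
exists (Num.min (e / 2) ((tf - t) / 2)); split; [|split].
- by rewrite lt_min !divr_gt0 // subr_gt0.
- have : Num.min (e / 2) ((tf - t) / 2) <= (tf - t) / 2 by rewrite ge_min lexx orbT.
  move=> H; have : (tf - t) / 2 < tf - t by rewrite ltr_pdivrMr // ltr_pMr ?subr_gt0 // ltr1n.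
  move=> H2; have := le_lt_trans H H2; by rewrite ltrBrDl.
- move=> s /andP [ts std].
  have Hs : [set` `[to, tf[] s.
    rewrite /= in_itv /= (le_trans tot ts) /=.
    apply: (le_lt_trans std); rewrite -ltrBrDl.
    apply: (le_lt_trans (y := (tf - t) / 2)); first by rewrite ge_min lexx orbT.
    by rewrite ltr_pdivrMr // ltr_pMr ?subr_gt0 // ltr1n.
  have Hb : ball t e s.
    rewrite /ball /= ler0_norm ?subr_le0 // opprB ltrBlDl.
    apply: (le_lt_trans std); rewrite ltrD2l.
    apply: (le_lt_trans (y := e / 2)); first by rewrite ge_min lexx.
    by rewrite ltr_pdivrMr // ltr_pMr // ltr1n.
  exact: (He s Hb Hs).
Unshelve. all: by end_near. Qed.

Lemma Rint_integrable (R : realType) (a b : R) (g : R -> R) :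
  {within `[a, b], continuous g} ->
  (@lebesgue_measure R).-integrable `[a, b] (EFin \o g).
Proof. move=> cg; apply: continuous_compact_integrable => //; exact: segment_compact. Qed.

Lemma within_lin (R : realType) (A : set R) (p q : R -> R) (w : R) :
  {within A, continuous p} -> {within A, continuous q} ->
  {within A, continuous (fun s => p s - w * q s)}.
Proof.
move=> cp cq.
have cwq : {within A, continuous (fun s => w * q s)}.
  by move=> x; apply: continuousM; [exact: cst_continuous | exact: cq].
exact: (within_continuousB cp cwq).
Qed.

Lemma Rint_lb (R : realType) (a b c : R) (g : R -> R) : a < b ->
  {within `[a, b], continuous g} -> (forall s, a <= s <= b -> c <= g s) ->
  c * (b - a) <= Defs.Rint a b g.
Proof.
move=> ab cg Hg; rewrite /Defs.Rint.
have -> : c * (b - a) = \int[lebesgue_measure]_(s in `[a, b]) c.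
  rewrite Rintegral_cst //; have := @lebesgue_measure_itv R `[a, b]; rewrite /= lte_fin ab => ->; by rewrite -EFinB.
apply: le_Rintegral => //.
- apply: Rint_integrable; apply: continuous_subspaceT => x; exact: cst_continuous.
- exact: Rint_integrable.

Qed.

Lemma Rint_lin (R : realType) (a b w : R) (p q : R -> R) :
  {within `[a, b], continuous p} -> {within `[a, b], continuous q} ->
  Defs.Rint a b (fun s => p s - w * q s) = Defs.Rint a b p - w * Defs.Rint a b q.
Proof.
move=> cp cq; rewrite /Defs.Rint RintegralB //.
- by rewrite RintegralZl //; exact: Rint_integrable.
- exact: Rint_integrable.
- apply: Rint_integrable => x; apply: continuousM; [exact: cst_continuous | exact: cq].
Qed.

Lemma is_derive_shiftfun (R : realType) (V : normedModType R) (x : R -> V) (c s : R) (d : V) :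
  is_derive (s + c) 1 x d -> is_derive s 1 (fun z => x (z + c)) d.
Proof.
move=> [dx vx].
have E : (fun h : R => h^-1 *: (((fun z => x (z + c)) \o shift s) (h *: 1) - x (s + c))) =
         (fun h : R => h^-1 *: ((x \o shift (s + c)) (h *: 1) - x (s + c))).
  by apply/funext => h /=; rewrite addrA.
apply: DeriveDef.
- by rewrite /derivable /= E.
- by rewrite /derive /= E.
Qed.

Lemma within_affine (R : realType) (A : set R) (p q : R -> R) (w k : R) :
  {within A, continuous p} -> {within A, continuous q} ->
  {within A, continuous (fun s => p s - w * q s - k)}.
Proof.
move=> cp cq.
have ck : {within A, continuous (fun _ : R => k)}.
  by apply: continuous_subspaceT => x; exact: cst_continuous.
exact (within_continuousB (within_lin (w:=w) cp cq) ck).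
Qed.

Lemma within_scale (R : realType) (A : set R) (q : R -> R) (w : R) :
  {within A, continuous q} -> {within A, continuous (fun s => w * q s)}.
Proof. by move=> cq x; apply: continuousM; [exact: cst_continuous | exact: cq]. Qed.

Lemma Rint_scale (R : realType) (a b w : R) (q : R -> R) :
  {within `[a, b], continuous q} ->
  Defs.Rint a b (fun s => w * q s) = w * Defs.Rint a b q.
Proof. by move=> cq; rewrite /Defs.Rint RintegralZl //; exact: Rint_integrable. Qed.

Theorem theorem3 (R : realType) (n m : nat)
  (f : 'rV[R]_n -> 'rV[R]_m -> 'rV[R]_n) (h : 'rV[R]_n -> 'rV[R]_m -> 'rV[R]_m)
  (X : set 'rV[R]_n) (U : set 'rV[R]_m) (S : 'rV[R]_n -> R)
  (HS0 : forall z, X z -> 0 <= S z) (HS00 : S 0 = 0)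
  (x : R -> 'rV[R]_n) (u y : R -> 'rV[R]_m) (to tf Ks : R)
  (Hto : to < tf)
  (HXU : forall t, to <= t < tf -> X (x t) /\ U (u t))
  (Hy : forall t, to <= t < tf -> y t = h (x t) (u t))
  (Hxc : {within `[to, tf[, continuous x})
  (Hode : forall t, to < t < tf -> is_derive t 1 x (f (x t) (u t)))
  (Huc : {within `[to, tf[, continuous u})
  (Hyc : {within `[to, tf[, continuous y})
  (HSc : {within `[to, tf[, continuous (S \o x)})
  (HSd : forall t, to < t < tf ->
     derivable (S \o x) t 1 /\ `| 'D_1 (S \o x) t | <= Ks) :
  (gamma_hat2 u y to tf Ks <= gamma_star2 f h S X U)%E /\
  (nu_star f h S X U <= nu_hat u y to tf Ks)%E /\
  (rho_star f h S X U <= rho_hat u y to tf Ks)%E.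
Proof.
have inB : forall t d s, to <= t -> 0 < d -> t + d < tf -> 0 <= s <= d ->
    to <= s + t < tf.
  move=> t d s tot d0 tdf /andP[s0 sd]; apply/andP; split.
    by rewrite -(add0r to) lerD.
  by apply: le_lt_trans tdf; rewrite addrC lerD2l.
have cs : forall t d (V : topologicalType) (g : R -> V), to <= t -> 0 < d -> t + d < tf ->
    {within `[to, tf[, continuous g} -> {within `[0, d], continuous (fun s => g (s + t))}.
  move=> t d V g tot d0 tdf cg; apply: shift_within cg _ => s /=.
  rewrite !in_itv /= => Hs; exact: (inB t d s tot d0 tdf Hs).
have adm : forall t d, to <= t -> 0 < d -> t + d < tf ->
    admissible f X U 0 d (fun s => x (s + t)) (fun s => u (s + t)).
  move=> t d tot d0 tdf; split; [by []|split; [by []|split; [|split; [|split]]]].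
  - by move=> s Hs; apply: HXU; exact: (inB t d s tot d0 tdf Hs).
  - exact: cs.
  - exact: cs.
  - move=> s /andP[s0 sd]; apply: is_derive_shiftfun; apply: Hode.
    have /andP[H1 H2] := inB t d s tot d0 tdf (introT andP (conj (ltW s0) (ltW sd))).
    rewrite H2 andbT; apply: le_lt_trans tot _; by rewrite ltrDr.
have dS : forall t d, to <= t -> 0 < d -> t + d < tf ->
    - (Ks * d) <= S (x (d + t)) - S (x (0 + t)).
  move=> t d tot d0 tdf.
  have tlt : t < t + d by rewrite ltrDl.
  rewrite add0r (addrC d t).
  have Hder : forall z, z \in `]t, t + d[ -> is_derive z 1 (S \o x) ('D_1 (S \o x) z).
    move=> z; rewrite in_itv /= => /andP[z1 z2].
    have ztf : to < z < tf.
      by rewrite (le_lt_trans tot z1) /= (lt_trans z2 tdf).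
    have [Hd _] := HSd z ztf; exact: derivableP.
  have Hcont : {within `[t, t + d], continuous (S \o x)}.
    apply: continuous_subspaceW HSc => z /=; rewrite !in_itv /= => /andP[z1 z2].
    by rewrite (le_trans tot z1) /= (le_lt_trans z2 tdf).
  have [c cI E] := @MVT R (S \o x) ('D_1 (S \o x)) t (t + d) tlt Hder Hcont.
  move: E => /= ->; rewrite (addrC t d) addrK.
  move: cI; rewrite in_itv /= => /andP[c1 c2].
  have ctf : to < c < tf.
    by rewrite (le_lt_trans tot c1) /= (lt_trans c2 tdf).
  have [_ Hb] := HSd c ctf.
  rewrite -mulNr; apply: ler_wpM2r; first exact: ltW.
  by move: Hb; rewrite ler_norml => /andP[].
have inT : forall t d s : R, 0 <= s <= d -> t <= s + t <= t + d.
  move=> t d s /andP[s0 sd]; apply/andP; split; first by rewrite lerDr.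
  by rewrite addrC lerD2l.
have Iyy_eq : forall t d, to <= t -> 0 < d -> t + d < tf ->
    Iyy h 0 d (fun s => x (s + t)) (fun s => u (s + t)) =
    Defs.Rint 0 d (fun s => vdot (y (s + t)) (y (s + t))).
  move=> t d tot d0 tdf; rewrite /Iyy /Defs.Rint; apply: eq_Rintegral => s.
  rewrite inE /= in_itv /= => Hs; rewrite Hy //; exact: (inB t d s tot d0 tdf Hs).
have Iuy_eq : forall t d, to <= t -> 0 < d -> t + d < tf ->
    Iuy h 0 d (fun s => x (s + t)) (fun s => u (s + t)) =
    Defs.Rint 0 d (fun s => vdot (u (s + t)) (y (s + t))).
  move=> t d tot d0 tdf; rewrite /Iuy /Defs.Rint; apply: eq_Rintegral => s.
  rewrite inE /= in_itv /= => Hs; rewrite Hy //; exact: (inB t d s tot d0 tdf Hs).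
have cuu := vdot_within Huc Huc.
have cyy := vdot_within Hyc Hyc.
have cuy := vdot_within Huc Hyc.
split.
  apply/ereal_supP => _ [t [/andP[tot ttf] [ut0 ->]]].
  set a := vdot (u t) (u t); have a0 : 0 < a := vdot_gt0 ut0.
  set v := (vdot (y t) (y t) - Ks) / a.
  apply/lee_subgt0Pr => e e0; rewrite -EFinB.
  set w := v - e.
  have g1t : 0 < vdot (y t) (y t) - w * a - Ks.
    have -> : vdot (y t) (y t) - w * a - Ks = e * a.
      rewrite /w /v; field; exact: lt0r_neq0.
    exact: mulr_gt0.
  have g2t : 0 < a - 0 * a - a / 2 by rewrite mul0r subr0; lra.
  have [d [d0 [tdf Hpos]]] := core (within_affine (w:=w) (k:=Ks) cyy cuu)
     (within_affine (w:=0) (k:=a/2) cuu cuu) tot ttf g1t g2t.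
  have Huu : a / 2 * (d - 0) <= Iuu 0 d (fun s => u (s + t)).
    apply: Rint_lb; first by [].
      exact: (cs t d _ _ tot d0 tdf cuu).
    move=> s Hs; have [_ H] := Hpos _ (inT t d s Hs).
    by move: H; rewrite mul0r subr0 subr_gt0 => /ltW.
  have Hmain : Ks * (d - 0) <= Iyy h 0 d (fun s => x (s + t)) (fun s => u (s + t))
      - w * Iuu 0 d (fun s => u (s + t)).
    rewrite Iyy_eq // /Iuu -Rint_lin; last 2 first.
      exact: (cs t d _ _ tot d0 tdf cyy).
      exact: (cs t d _ _ tot d0 tdf cuu).
    apply: Rint_lb; first by [].
      exact: (cs t d _ _ tot d0 tdf (within_lin (w:=w) cyy cuu)).
    move=> s Hs; have [H _] := Hpos _ (inT t d s Hs).
    by move: H; rewrite subr_gt0 => /ltW.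
  have HdS := dS t d tot d0 tdf.
  have Iuu0 : 0 < Iuu 0 d (fun s => u (s + t)).
    apply: lt_le_trans Huu; rewrite subr0; apply: mulr_gt0 => //; exact: divr_gt0.
  apply: le_trans (ereal_sup_ubound _); last first.
    exists 0, d, (fun s => x (s + t)), (fun s => u (s + t)); split; first exact: adm.
    by split; [exact: lt0r_neq0 | reflexivity].
  rewrite lee_fin /psi_gamma ler_pdivlMr //.
  move: Hmain HdS; rewrite subr0.
  set I1 := Iyy _ _ _ _ _; set I2 := Iuu _ _ _.
  move=> H1 H2; set P := w * I2; set Q := Ks * d; move: H1 H2; rewrite -/P -/Q => H1 H2; lra.
split.
  apply/ereal_infP => _ [t [/andP[tot ttf] [ut0 ->]]].
  set a := vdot (u t) (u t); have a0 : 0 < a := vdot_gt0 ut0.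
  set v := (vdot (u t) (y t) + Ks) / a.
  apply/lee_addgt0Pr => e e0; rewrite -EFinD.
  set w := v + e.
  have g1t : 0 < w * a - 1 * vdot (u t) (y t) - Ks.
    have -> : w * a - 1 * vdot (u t) (y t) - Ks = e * a.
      rewrite /w /v; field; exact: lt0r_neq0.
    exact: mulr_gt0.
  have g2t : 0 < a - 0 * a - a / 2 by rewrite mul0r subr0; lra.
  have [d [d0 [tdf Hpos]]] := core (within_affine (w:=1) (k:=Ks) (within_scale (w:=w) cuu) cuy)
     (within_affine (w:=0) (k:=a/2) cuu cuu) tot ttf g1t g2t.
  have Huu : a / 2 * (d - 0) <= Iuu 0 d (fun s => u (s + t)).
    apply: Rint_lb; first by [].
      exact: (cs t d _ _ tot d0 tdf cuu).
    move=> s Hs; have [_ H] := Hpos _ (inT t d s Hs).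
    by move: H; rewrite mul0r subr0 subr_gt0 => /ltW.
  have Hmain : Ks * (d - 0) <= w * Iuu 0 d (fun s => u (s + t))
      - 1 * Iuy h 0 d (fun s => x (s + t)) (fun s => u (s + t)).
    rewrite Iuy_eq // /Iuu -Rint_scale; last exact: (cs t d _ _ tot d0 tdf cuu).
    rewrite -Rint_lin; last 2 first.
      exact: (cs t d _ _ tot d0 tdf (within_scale (w:=w) cuu)).
      exact: (cs t d _ _ tot d0 tdf cuy).
    apply: Rint_lb; first by [].
      exact: (cs t d _ _ tot d0 tdf (within_lin (w:=1) (within_scale (w:=w) cuu) cuy)).
    move=> s Hs; have [H _] := Hpos _ (inT t d s Hs).
    by move: H; rewrite subr_gt0 => /ltW.
  have HdS := dS t d tot d0 tdf.
  have Iuu0 : 0 < Iuu 0 d (fun s => u (s + t)).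
    apply: lt_le_trans Huu; rewrite subr0; apply: mulr_gt0 => //; exact: divr_gt0.
  apply: le_trans (ereal_inf_lbound _) _.
    exists 0, d, (fun s => x (s + t)), (fun s => u (s + t)); split; first exact: adm.
    by split; [exact: lt0r_neq0 | reflexivity].
  rewrite lee_fin /psi_nu ler_pdivrMr //.
  move: Hmain HdS; rewrite subr0 mul1r.
  set I1 := Iuy _ _ _ _ _; set I2 := Iuu _ _ _.
  move=> H1 H2; set P := w * I2; set Q := Ks * d; move: H1 H2; rewrite -/P -/Q => H1 H2; lra.
apply/ereal_infP => _ [t [/andP[tot ttf] [yt0 ->]]].
set a := vdot (y t) (y t); have a0 : 0 < a := vdot_gt0 yt0.
set v := (vdot (u t) (y t) + Ks) / a.
apply/lee_addgt0Pr => e e0; rewrite -EFinD.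
set w := v + e.
have g1t : 0 < w * a - 1 * vdot (u t) (y t) - Ks.
  have -> : w * a - 1 * vdot (u t) (y t) - Ks = e * a.
    rewrite /w /v; field; exact: lt0r_neq0.
  exact: mulr_gt0.
have g2t : 0 < a - 0 * a - a / 2 by rewrite mul0r subr0; lra.
have [d [d0 [tdf Hpos]]] := core (within_affine (w:=1) (k:=Ks) (within_scale (w:=w) cyy) cuy)
   (within_affine (w:=0) (k:=a/2) cyy cyy) tot ttf g1t g2t.
have Hyy : a / 2 * (d - 0) <= Iyy h 0 d (fun s => x (s + t)) (fun s => u (s + t)).
  rewrite Iyy_eq //; apply: Rint_lb; first by [].
    exact: (cs t d _ _ tot d0 tdf cyy).
  move=> s Hs; have [_ H] := Hpos _ (inT t d s Hs).
  by move: H; rewrite mul0r subr0 subr_gt0 => /ltW.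
have Hmain : Ks * (d - 0) <= w * Iyy h 0 d (fun s => x (s + t)) (fun s => u (s + t))
    - 1 * Iuy h 0 d (fun s => x (s + t)) (fun s => u (s + t)).
  rewrite Iuy_eq // Iyy_eq // -Rint_scale; last exact: (cs t d _ _ tot d0 tdf cyy).
  rewrite -Rint_lin; last 2 first.
    exact: (cs t d _ _ tot d0 tdf (within_scale (w:=w) cyy)).
    exact: (cs t d _ _ tot d0 tdf cuy).
  apply: Rint_lb; first by [].
    exact: (cs t d _ _ tot d0 tdf (within_lin (w:=1) (within_scale (w:=w) cyy) cuy)).
  move=> s Hs; have [H _] := Hpos _ (inT t d s Hs).
  by move: H; rewrite subr_gt0 => /ltW.
have HdS := dS t d tot d0 tdf.
have Iyy0 : 0 < Iyy h 0 d (fun s => x (s + t)) (fun s => u (s + t)).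
  apply: lt_le_trans Hyy; rewrite subr0; apply: mulr_gt0 => //; exact: divr_gt0.
apply: le_trans (ereal_inf_lbound _) _.
  exists 0, d, (fun s => x (s + t)), (fun s => u (s + t)); split; first exact: adm.
  by split; [exact: lt0r_neq0 | reflexivity].
rewrite lee_fin /psi_rho ler_pdivrMr //.
move: Hmain HdS; rewrite subr0 mul1r.
set I1 := Iuy _ _ _ _ _; set I2 := Iyy _ _ _ _ _.
move=> H1 H2; set P := w * I2; set Q := Ks * d; move: H1 H2; rewrite -/P -/Q => H1 H2; lra.
Qed.
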